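(* Let $n\ge 2$, let $V\in\mathbb{R}^{n\times(n-1)}$ be such that $\big[V\ \ \tfrac1{\sqrt n}e\big]$ is orthogonal, and let $v_\ell\in\mathbb{R}^{1\times(n-1)}$ denote the $\ell$-th row of $V$. Let $D_0\in\mathcal{E}^n$, indices $1\le i<j\le n$, $\alpha\in\mathbb{R}$, and suppose $D_n:=D_0+\alpha E_{ij}\notin\mathcal{E}^n$. Let $\bar X$ be the unique minimizer of $\min_{X\in\mathcal{S}^{n-1},\,X\succeq0}\frac12\|\mathcal{K}_V(X)-D_n\|_F^2$, and let $X_0:=\mathcal{K}_V^\dagger(D_0)$. Put $$Y:=\mathcal{K}_V^*(E_{ij})=2\,(v_i-v_j)^T(v_i-v_j).$$ Then $\alpha\neq0$, $0\neq Y\succeq0$, and the following are equivalent: (a) $D_0=\mathcal{K}_V(\bar X)$ (i.e. $D_0$ is the nearest EDM to $D_n$); (b) $X_0\in\mathcal{S}^{n-1}_+\cap Y^\perp$ (equivalently $\operatorname{trace}(X_0Y)=0$) and $\alpha<0$; (c) $(D_0)_{ij}=0$ and $\alpha<0$.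
   Context: $\mathcal{E}^n$ is the closed convex cone of $n\times n$ Euclidean distance matrices (squared distances). $E_{ij}=e_ie_j^T+e_je_i^T$ with $e_i$ the standard unit vectors; $e$ is the all-ones vector. $\mathcal{K}(G)=\operatorname{diag}(G)e^T+e\operatorname{diag}(G)^T-2G$ (Lindenstrauss operator), $\mathcal{K}^*(D)=2(\operatorname{Diag}(De)-D)$ its adjoint, $\mathcal{K}_V(X)=\mathcal{K}(VXV^T)$ for $X\in\mathcal{S}^{n-1}$, $\mathcal{K}_V^*(D)=V^T\mathcal{K}^*(D)V$, and $\mathcal{K}_V^\dagger$ is the Moore–Penrose pseudoinverse of $\mathcal{K}_V$. $\mathcal{S}^{n-1}_+$ is the cone of positive semidefinite matrices in $\mathcal{S}^{n-1}$ and $Y^\perp=\{X:\operatorname{trace}(XY)=0\}$. *)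

(* Defs.v *)
From HB Require Import structures.
From mathcomp Require Import all_boot all_order all_algebra.
From mathcomp Require Import reals.
Set Implicit Arguments. Unset Strict Implicit. Unset Printing Implicit Defensive.
Import Order.TTheory GRing.Theory Num.Theory.
Local Open Scope ring_scope.

Section Defs.
Variable R : realType.

Definition symmx m (X : 'M[R]_m) : Prop := X^T = X.

Definition psdmx m (X : 'M[R]_m) : Prop :=
  symmx X /\ forall x : 'cV[R]_m, 0 <= (x^T *m X *m x) 0 0.

Definition frob2 m p (A : 'M[R]_(m, p)) : R := \sum_i \sum_j (A i j) ^+ 2.

Definition is_EDM n (D : 'M[R]_n) : Prop :=
  exists (k : nat) (P : 'M[R]_(n, k)),
    forall i j, D i j = \sum_l (P i l - P j l) ^+ 2.

Definition Emx n (i j : 'I_n) : 'M[R]_n := delta_mx i j + delta_mx j i.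

(* Lindenstrauss operator K(G) = diag(G) e^T + e diag(G)^T - 2G *)
Definition Kop n (G : 'M[R]_n) : 'M[R]_n :=
  \matrix_(i, j) (G i i + G j j - 2 * G i j).

Definition Kadj n (D : 'M[R]_n) : 'M[R]_n :=
  2%:R *: (diag_mx (D *m const_mx 1)^T - D).

Definition KV n m (V : 'M[R]_(n, m)) (X : 'M[R]_m) : 'M[R]_n :=
  Kop (V *m X *m V^T).

Definition KVadj n m (V : 'M[R]_(n, m)) (D : 'M[R]_n) : 'M[R]_m :=
  V^T *m Kadj D *m V.

(* X is the value of the Moore--Penrose pseudoinverse of K_V (as a map
   S^m -> S^n) at D: the minimum-norm least-squares solution. *)
Definition is_KV_pinv_value n m (V : 'M[R]_(n, m)) (D : 'M[R]_n) (X : 'M[R]_m)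
  : Prop :=
  let lsq Z := symmx Z /\
      forall W : 'M[R]_m, symmx W -> frob2 (KV V Z - D) <= frob2 (KV V W - D) in
  lsq X /\ forall Z, lsq Z -> frob2 X <= frob2 Z.

End Defs.

(* Main.v *)
Require Import Defs.
From HB Require Import structures.
From mathcomp Require Import all_boot all_order all_algebra.
From mathcomp Require Import reals.
From mathcomp Require Import ring lra.
Import Order.TTheory GRing.Theory Num.Theory.
Local Open Scope ring_scope.
Section Aux.
Variable R : realType.
Set Implicit Arguments. Unset Strict Implicit. Unset Printing Implicit Defensive.

Definition fdot m p (A B : 'M[R]_(m, p)) : R := \sum_i \sum_j A i j * B i j.

Lemma frob2_ge0 m p (A : 'M[R]_(m,p)) : 0 <= frob2 A.
Proof. by apply: sumr_ge0 => k _; apply: sumr_ge0 => l _; apply: sqr_ge0. Qed.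

Lemma frob2_eq0 m p (A : 'M[R]_(m,p)) : frob2 A <= 0 -> A = 0.
Proof.
move=> h; have h0 : frob2 A = 0 by apply/eqP; rewrite eq_le h frob2_ge0.
apply/matrixP => k l; rewrite mxE.
have hk : \sum_l A k l ^+ 2 = 0.
  apply: (psumr_eq0P (P := predT) (F := fun k => \sum_l A k l ^+ 2)) => //.
  by move=> k' _; apply: sumr_ge0 => l' _; apply: sqr_ge0.
have : A k l ^+ 2 = 0.
  by apply: (psumr_eq0P (P:=predT) (F:=fun l => A k l ^+ 2)) => // l' _; apply: sqr_ge0.
by move/eqP; rewrite sqrf_eq0 => /eqP.
Qed.

Lemma frob2D m p (A B : 'M[R]_(m,p)) : frob2 (A + B) = frob2 A + 2 * fdot A B + frob2 B.
Proof.
rewrite /frob2 /fdot mulr_sumr -!big_split; apply: eq_bigr => k _.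
rewrite mulr_sumr -!big_split; apply: eq_bigr => l _; rewrite !mxE /=; ring.
Qed.

Lemma frob2Z m p t (A : 'M[R]_(m,p)) : frob2 (t *: A) = t ^+ 2 * frob2 A.
Proof.
rewrite /frob2 mulr_sumr; apply: eq_bigr => k _.
rewrite mulr_sumr; apply: eq_bigr => l _; rewrite !mxE; ring.
Qed.

Lemma fdotZr m p t (A B : 'M[R]_(m,p)) : fdot A (t *: B) = t * fdot A B.
Proof.
rewrite /fdot mulr_sumr; apply: eq_bigr => k _.
rewrite mulr_sumr; apply: eq_bigr => l _; rewrite !mxE; ring.
Qed.

Lemma fdotDr m p (A B C : 'M[R]_(m,p)) : fdot A (B + C) = fdot A B + fdot A C.
Proof.
rewrite /fdot -big_split; apply: eq_bigr => k _.
rewrite -big_split; apply: eq_bigr => l _; rewrite !mxE /=; ring.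
Qed.

Lemma fdot_delta m p (A : 'M[R]_(m,p)) a b : fdot A (delta_mx a b) = A a b.
Proof.
rewrite /fdot (bigD1 a) //= [X in _ + X]big1 => [|k hk]; last first.
  by apply: big1 => l _; rewrite mxE (negbTE hk) /= mulr0.
rewrite addr0 (bigD1 b) //= [X in _ + X]big1 => [|l hl]; last by rewrite mxE eqxx (negbTE hl) /= mulr0.
by rewrite mxE !eqxx mulr1 addr0.
Qed.

Lemma fdotE n (A : 'M[R]_n) i j : fdot A (Emx R i j) = A i j + A j i.
Proof. by rewrite /Emx fdotDr !fdot_delta. Qed.

Lemma small_t (a b : R) : 0 <= b ->
  (forall t, 0 < t -> t <= 1 -> 0 <= a * t + b * t ^+ 2) -> 0 <= a.
Proof.
move=> b0 h; rewrite leNgt; apply/negP => a0.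
pose d := - a + 2 * b.
have d0 : 0 < d by rewrite /d; lra.
pose t := - a / d.
have t0 : 0 < t by rewrite /t divr_gt0 // oppr_gt0.
have t1 : t <= 1 by rewrite /t ler_pdivrMr // mul1r /d; lra.
have := h t t0 t1.
have -> : a * t + b * t ^+ 2 = a ^+ 2 * (a - b) / d ^+ 2.
  rewrite /t /d; field; by rewrite gt_eqF.
rewrite leNgt => /negP; apply.
rewrite pmulr_llt0 ?invr_gt0 ?exprn_gt0 // pmulr_rlt0 ?exprn_even_gt0 //=; first lra.
by rewrite lt_eqF.
Qed.

End Aux.

Section Aux2.
Variable R : realType.
Set Implicit Arguments. Unset Strict Implicit. Unset Printing Implicit Defensive.

Lemma Kop_lin n (A B : 'M[R]_n) t : Kop (A + t *: B) = Kop A + t *: Kop B.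
Proof. by apply/matrixP => k l; rewrite !mxE; ring. Qed.

Lemma KV_lin n m (V : 'M[R]_(n,m)) X Y t : KV V (X + t *: Y) = KV V X + t *: KV V Y.
Proof. by rewrite /KV mulmxDr mulmxDl -scalemxAr -scalemxAl Kop_lin. Qed.

Lemma KV_scale n m (V : 'M[R]_(n,m)) X t : KV V (t *: X) = t *: KV V X.
Proof.
by apply/matrixP => k l; rewrite /KV -scalemxAr -scalemxAl !mxE; ring.
Qed.

Lemma KVB n m (V : 'M[R]_(n,m)) X Y : KV V (X - Y) = KV V X - KV V Y.
Proof.
have := KV_lin V X Y (-1); rewrite !scaleN1r => <-; by [].
Qed.

Lemma Kop_AAt n k (A : 'M[R]_(n,k)) a b :
  Kop (A *m A^T) a b = \sum_l (A a l - A b l) ^+ 2.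
Proof.
rewrite !mxE mulr_sumr -big_split -sumrB; apply: eq_bigr => l _; rewrite !mxE /=; ring.
Qed.

Lemma psd_AAt n k (A : 'M[R]_(n,k)) : psdmx (A *m A^T).
Proof.
split; first by rewrite /symmx trmx_mul trmxK.
move=> x.
have -> : x^T *m (A *m A^T) *m x = (A^T *m x)^T *m (A^T *m x).
  by rewrite trmx_mul trmxK !mulmxA.
rewrite mxE; apply: sumr_ge0 => l _; rewrite mxE -expr2; apply: sqr_ge0.
Qed.

Lemma psd_congr n m (V : 'M[R]_(n,m)) X : psdmx X -> psdmx (V *m X *m V^T).
Proof.
case=> hs hq; split; first by rewrite /symmx !trmx_mul trmxK hs mulmxA.
move=> x; have := hq (V^T *m x).
by rewrite trmx_mul trmxK !mulmxA.
Qed.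

Lemma psd_add_scale m (X Y : 'M[R]_m) t : psdmx X -> psdmx Y -> 0 <= t -> psdmx (X + t *: Y).
Proof.
case=> hs hq [hs' hq'] t0; split.
  by rewrite /symmx linearD linearZ /= hs hs'.
move=> x; rewrite mulmxDr mulmxDl -scalemxAr -scalemxAl mxE [X in _ + X]mxE.
by apply: addr_ge0 => //; apply: mulr_ge0.
Qed.

Lemma psd_scale m (X : 'M[R]_m) t : psdmx X -> 0 <= t -> psdmx (t *: X).
Proof.
case=> hs hq t0; split; first by rewrite /symmx linearZ /= hs.
by move=> x; rewrite -scalemxAr -scalemxAl mxE; apply: mulr_ge0.
Qed.

Lemma trmx_dr n (a b : 'I_n) : (delta_mx 0 a - delta_mx 0 b : 'rV[R]_n)^T = delta_mx a 0 - delta_mx b 0.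
Proof. by rewrite linearB /= !trmx_delta. Qed.

Lemma dr_mul_entry n p (a b : 'I_n) (M : 'M[R]_(n,p)) l :
  ((delta_mx 0 a - delta_mx 0 b : 'rV[R]_n) *m M) 0 l = M a l - M b l.
Proof. by rewrite mulmxBl -!rowE !mxE. Qed.

Lemma Kop_quad n (G : 'M[R]_n) a b : symmx G ->
  Kop G a b = ((delta_mx 0 a - delta_mx 0 b : 'rV[R]_n) *m G *m (delta_mx 0 a - delta_mx 0 b : 'rV[R]_n)^T) 0 0.
Proof.
move=> hG; rewrite trmx_dr mulmxBr -!colE.
have e (M : 'rV[R]_n) k : col k M 0 0 = M 0 k by rewrite mxE.
rewrite [RHS]mxE [X in _ + X]mxE !e !dr_mul_entry [LHS]mxE.
have : G^T b a = G b a by rewrite hG.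
rewrite mxE => ->; ring.
Qed.

Lemma Kop_psd_ge0 n (G : 'M[R]_n) a b : psdmx G -> 0 <= Kop G a b.
Proof.
case=> hs hq; rewrite Kop_quad //.
by have := hq (delta_mx 0 a - delta_mx 0 b : 'rV[R]_n)^T; rewrite trmxK.
Qed.

End Aux2.

Section Aux3.
Variable R : realType.
Set Implicit Arguments. Unset Strict Implicit. Unset Printing Implicit Defensive.

Lemma tr_AtA m p (A : 'M[R]_(m,p)) : \tr (A^T *m A) = frob2 A.
Proof.
rewrite /mxtrace /frob2 [RHS]exchange_big; apply: eq_bigr => k _.
rewrite mxE; apply: eq_bigr => l _; by rewrite mxE expr2.
Qed.

Lemma orth_facts n (hn : (0 < n)%N) (V : 'M[R]_(n, n.-1)) (c : 'M[R]_(n,1)) :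
  (row_mx V c)^T *m row_mx V c = 1%:M ->
  [/\ V^T *m V = 1%:M, V^T *m c = 0 & V *m V^T = 1%:M - c *m c^T].
Proof.
move=> hQ.
have hQ' := hQ; rewrite tr_row_mx mul_col_row scalar_mx_block in hQ'.
case/eq_block_mx: hQ' => hVV hVc _ _.
split => //.
set Q := row_mx V c in hQ.
have hP : Q *m Q^T = V *m V^T + c *m c^T by rewrite /Q tr_row_mx mul_row_col.
set P := Q *m Q^T in hP.
have hPP : P *m P = P by rewrite /P mulmxA -(mulmxA Q) hQ mulmx1.
have hPs : P^T = P by rewrite /P trmx_mul trmxK.
have htr : \tr P = n%:R by rewrite /P mxtrace_mulC hQ mxtrace1 addn1 prednK.
set M := 1%:M - P.
have hMT : M^T = M by rewrite /M linearB /= trmx1 hPs.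
have hM : M^T *m M = M.
  by rewrite hMT /M mulmxBl mul1mx mulmxBr mulmx1 hPP subrr subr0.
have hM0 : frob2 M <= 0 by rewrite -tr_AtA hM /M linearB /= mxtrace1 htr subrr.
have := frob2_eq0 hM0.
rewrite /M hP => /eqP; rewrite subr_eq0 => /eqP ->. by rewrite addrK.
Qed.

Lemma EDM_KV n m (V : 'M[R]_(n,m)) s (D : 'M[R]_n) :
  V *m V^T = 1%:M - (const_mx s : 'M[R]_(n,1)) *m (const_mx s)^T -> is_EDM D ->
  exists X, psdmx X /\ KV V X = D.
Proof.
move=> hVV [k [P hP]].
exists ((V^T *m P) *m (V^T *m P)^T); split; first exact: psd_AAt.
have -> : KV V ((V^T *m P) *m (V^T *m P)^T) = Kop ((V *m V^T *m P) *m (V *m V^T *m P)^T).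
  rewrite /KV !trmx_mul !trmxK !mulmxA; reflexivity.
apply/matrixP => a b; rewrite Kop_AAt hP; apply: eq_bigr => l _.
pose c : 'M[R]_(n,1) := const_mx s.
have e x : (c *m c^T *m P) x l = s * (c^T *m P) 0 l.
  by rewrite -mulmxA [LHS]mxE big_ord1 /c [const_mx s x _]mxE.
rewrite hVV -/c mulmxBl mul1mx [(P - _) a l]mxE [(P - _) b l]mxE.
rewrite [(- (c *m c^T *m P)) a l]mxE [(- (c *m c^T *m P)) b l]mxE !e; congr (_ ^+ 2); ring.
Qed.

Lemma Kop0 n (hn : (0 < n)%N) (G : 'M[R]_n) s : s != 0 -> G *m (const_mx s : 'M[R]_(n,1)) = 0 -> Kop G = 0 -> G = 0.
Proof.
move=> s0 hGc hK.
have hK' k l : G k k + G l l - 2 * G k l = 0 by have := congr1 (fun M : 'M[R]_n => M k l) hK; rewrite !mxE.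
have hrow k : \sum_l G k l = 0.
  have := congr1 (fun M : 'M[R]_(n,1) => M k 0) hGc; rewrite !mxE.
  under eq_bigr do rewrite mxE.
  rewrite -mulr_suml => /eqP; rewrite mulf_eq0 (negbTE s0) orbF => /eqP.
  by [].
set T := \sum_l G l l.
have hd k : G k k * n%:R + T = 0.
  have : \sum_l (G k k + G l l - 2 * G k l) = 0 by apply: big1.
  rewrite sumrB big_split /= sumr_const card_ord -mulr_sumr hrow mulr0 subr0.
  by rewrite -/T mulr_natr.
have hT : T = 0.
  have : \sum_k (G k k * n%:R + T) = 0 by apply: big1.
  rewrite big_split /= -mulr_suml sumr_const card_ord -/T -mulr_natr => h.
  have : T * (n.*2)%:R = 0 by rewrite -addnn natrD mulrDr; lra.
  by move/eqP; rewrite mulf_eq0 pnatr_eq0 double_eq0 (gtn_eqF hn) orbF => /eqP.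
have hkk k : G k k = 0.
  have := hd k; rewrite hT addr0 => /eqP; rewrite mulf_eq0 pnatr_eq0 (gtn_eqF hn) orbF.
  by move/eqP.
apply/matrixP => k l; rewrite mxE; have := hK' k l; rewrite !hkk; lra.
Qed.

Lemma KV_inj n m (hn : (0<n)%N) (V : 'M[R]_(n,m)) s X :
  V^T *m V = 1%:M -> V^T *m (const_mx s : 'M[R]_(n,1)) = 0 -> s != 0 ->
  KV V X = 0 -> X = 0.
Proof.
move=> hVV hVc s0 hK.
have hG : V *m X *m V^T = 0.
  apply: (Kop0 hn s0) => //.
  by rewrite -mulmxA hVc mulmx0.
have : V^T *m (V *m X *m V^T) *m V = X by rewrite !mulmxA hVV mul1mx -mulmxA hVV mulmx1.
by rewrite hG mulmx0 mul0mx => <-.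
Qed.

Lemma diag_delta n (a : 'I_n) : diag_mx (delta_mx 0 a) = delta_mx a a :> 'M[R]_n.
Proof.
apply/matrixP => k l; rewrite !mxE eqxx /=.
by case: (k =P a) => [->|_]; rewrite ?mul0rn // eq_sym; case: (l == a).
Qed.

Lemma delta_const n (a b : 'I_n) : (delta_mx a b : 'M[R]_n) *m (const_mx 1 : 'M[R]_(n,1)) = delta_mx a 0.
Proof.
apply/matrixP => k z; rewrite !mxE (bigD1 b) //= [X in _ + X]big1 => [|l hl].
  by rewrite !mxE eqxx (ord1 z) eqxx /= mulr1 addr0 !andbT.
by rewrite !mxE (negbTE hl) andbF mul0r.
Qed.

Lemma Kadj_E n (i j : 'I_n) :
  Kadj (Emx R i j) = 2%:R *: ((delta_mx 0 i - delta_mx 0 j : 'rV[R]_n)^T *m (delta_mx 0 i - delta_mx 0 j)).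
Proof.
rewrite /Kadj /Emx mulmxDl !delta_const.
have hT : (delta_mx i 0 + delta_mx j 0 : 'M[R]_(n,1))^T = delta_mx 0 i + delta_mx 0 j.
  by rewrite linearD /= !trmx_delta.
have hD (A B : 'rV[R]_n) : diag_mx (A + B) = diag_mx A + diag_mx B.
  by apply/matrixP => k l; rewrite !mxE mulrnDl.
rewrite hT hD !diag_delta trmx_dr mulmxBl !mulmxBr !mul_delta_mx.
congr (_ *: _); apply/matrixP => k l; rewrite !mxE /=; ring.
Qed.

End Aux3.

Lemma key (R : realType) n (D0 D' : 'M[R]_n) a (i j : 'I_n) :
  frob2 (D' - (D0 + a *: Emx R i j)) = frob2 (D' - D0) - 2 * a * ((D' - D0) i j + (D' - D0) j i)
     + frob2 (D0 - (D0 + a *: Emx R i j)).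
Proof.
have e1 : D' - (D0 + a *: Emx R i j) = (D' - D0) + (-a) *: Emx R i j.
  by rewrite scaleNr opprD addrA.
have e2 : D0 - (D0 + a *: Emx R i j) = (-a) *: Emx R i j.
  by rewrite scaleNr opprD addrA subrr add0r.
rewrite e1 frob2D fdotZr fdotE e2; ring.
Qed.

Lemma mxZ_entry (R : realType) m p t (A : 'M[R]_(m,p)) a b : (t *: A) a b = t * A a b.
Proof. by rewrite mxE. Qed.
Lemma mxB_entry (R : realType) m p (A B : 'M[R]_(m,p)) a b : (A - B) a b = A a b - B a b.
Proof. by rewrite !mxE. Qed.
Lemma frob20 (R : realType) m p : frob2 (0 : 'M[R]_(m,p)) = 0.
Proof. by rewrite /frob2 big1 // => k _; rewrite big1 // => l _; rewrite mxE expr0n. Qed.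

Theorem mainTheorem3 (R : realType) (n : nat) (hn : (2 <= n)%N)
  (V : 'M[R]_(n, n.-1))
  (hV : let Q := row_mx V (const_mx (Num.sqrt (n%:R))^-1 : 'M[R]_(n, 1)) in
        Q^T *m Q = 1%:M)
  (D0 : 'M[R]_n) (hD0 : is_EDM D0)
  (i j : 'I_n) (hij : (i < j)%N) (alpha : R)
  (hDn : ~ is_EDM (D0 + alpha *: Emx R i j))
  (Xbar : 'M[R]_(n.-1))
  (hXbar : psdmx Xbar /\
     forall X : 'M[R]_(n.-1), psdmx X ->
       2%:R^-1 * frob2 (KV V Xbar - (D0 + alpha *: Emx R i j))
       <= 2%:R^-1 * frob2 (KV V X - (D0 + alpha *: Emx R i j)))
  (X0 : 'M[R]_(n.-1)) (hX0 : is_KV_pinv_value V D0 X0) :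
  let Y := KVadj V (Emx R i j) in
  Y = 2%:R *: ((row i V - row j V)^T *m (row i V - row j V)) /\
  alpha != 0 /\ Y != 0 /\ psdmx Y /\
  (D0 = KV V Xbar <-> (psdmx X0 /\ \tr (X0 *m Y) = 0) /\ alpha < 0) /\
  ((psdmx X0 /\ \tr (X0 *m Y) = 0) /\ alpha < 0 <-> D0 i j = 0 /\ alpha < 0).
Proof.
move=> Y.
have n0 : (0 < n)%N by apply: leq_trans hn.
have hij' : i != j by rewrite neq_ltn hij.
have hji : (j == i) = false by rewrite eq_sym (negbTE hij').
pose s : R := (Num.sqrt (n%:R))^-1.
pose c : 'M[R]_(n,1) := const_mx s.
have hQ : (row_mx V c)^T *m row_mx V c = 1%:M := hV.
have [hVV hVc hVVt] := orth_facts n0 hQ.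
have s0 : s != 0 by rewrite /s invr_eq0 sqrtr_eq0 -ltNge ltr0n.
pose dr : 'rV[R]_n := delta_mx 0 i - delta_mx 0 j.
pose r := dr *m V.
have hrow : row i V - row j V = r by rewrite /r /dr mulmxBl -!rowE.
have hdrc : dr *m c = 0 by rewrite /dr mulmxBl -!rowE /c !row_const subrr.
have hdrdr : (dr *m dr^T) 0 0 = 2.
  rewrite /dr dr_mul_entry !mxE !eqxx (negbTE hij') hji /=; lra.
have hrr : (r *m r^T) 0 0 = 2.
  rewrite /r trmx_mul !mulmxA -(mulmxA dr) hVVt mulmxBr mulmx1 mulmxBl mulmxA hdrc !mul0mx subr0.
  exact: hdrdr.
have hY : Y = 2%:R *: (r^T *m r).
  by rewrite /Y /KVadj Kadj_E -scalemxAr -scalemxAl /r trmx_mul !mulmxA.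
have alpha0 : alpha != 0.
  by apply/eqP => a0; apply: hDn; rewrite a0 scale0r addr0.
have hY0 : Y != 0.
  apply/eqP => hY0; have : \tr Y = 4.
    rewrite hY mxtraceZ mxtrace_mulC /mxtrace big_ord1 hrr; lra.
  by rewrite hY0 linear0; lra.
have hYpsd : psdmx Y.
  rewrite hY; apply: psd_scale => //; have := psd_AAt r^T; rewrite trmxK.
  by [].
have [X' [hX'p hX'K]] := EDM_KV hVVt hD0.
have hKX0 : KV V X0 = D0.
  case: hX0 => [[hs0 hls] _]; have := hls X' hX'p.1.
  rewrite hX'K subrr frob20 => h; apply/eqP; rewrite -subr_eq0; apply/eqP/frob2_eq0 => //.
have hX0X' : X0 = X'.
  have : KV V (X0 - X') = 0 by rewrite KVB hKX0 hX'K subrr.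
  by move/(KV_inj n0 hVV hVc s0)/eqP; rewrite subr_eq0 => /eqP.
have hX0p : psdmx X0 by rewrite hX0X'.
have htr : \tr (X0 *m Y) = 2 * D0 i j.
  rewrite hY -scalemxAr mxtraceZ mulmxA mxtrace_mulC /mxtrace big_ord1.
  rewrite -hKX0 /KV Kop_quad; last exact: (psd_congr V hX0p).1.
  by congr (_ * _); rewrite /r /dr trmx_mul !mulmxA.
have hD0sym a b : D0 b a = D0 a b.
  case: hD0 => k [P hP]; rewrite !hP; apply: eq_bigr => l _.
  by rewrite -sqrrN opprB.
have hmin X : psdmx X -> frob2 (KV V Xbar - (D0 + alpha *: Emx R i j))
     <= frob2 (KV V X - (D0 + alpha *: Emx R i j)).
  by move=> hX; have := hXbar.2 X hX; rewrite ler_pM2l // invr_gt0 ltr0n.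
have hac : D0 = KV V Xbar <-> D0 i j = 0 /\ alpha < 0.
  split.
  - move=> hDa.
    have hineq X : psdmx X -> 0 <= frob2 (KV V X - D0)
        - 2 * alpha * ((KV V X - D0) i j + (KV V X - D0) j i).
      by move=> hX; have := hmin X hX; rewrite -hDa [X in _ <= X]key; lra.
    have hp : 0 <= - alpha * D0 i j * 4.
      apply: (small_t (b := frob2 D0)) (frob2_ge0 _) _ => t t0 t1.
      have := hineq (Xbar + t *: Xbar) (psd_add_scale hXbar.1 hXbar.1 (ltW t0)).
      rewrite KV_lin -hDa addrAC subrr add0r frob2Z !mxZ_entry hD0sym; lra.
    have hn' : 0 <= alpha * D0 i j * 4.
      apply: (small_t (b := frob2 D0)) (frob2_ge0 _) _ => t t0 t1.
      have h1t : 0 <= 1 - t by lra.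
      have := hineq ((1 - t) *: Xbar) (psd_scale hXbar.1 h1t).
      have e : (1 - t) *: D0 - D0 = (-t) *: D0.
        by rewrite scalerBl scale1r addrAC subrr add0r scaleNr.
      rewrite KV_scale -hDa e frob2Z !mxZ_entry hD0sym; lra.
    have hc0 : D0 i j = 0.
      have : alpha * D0 i j = 0 by lra.
      by move/eqP; rewrite mulf_eq0 (negbTE alpha0) /= => /eqP.
    split => //.
    pose X1 := r^T *m r.
    have hX1 : psdmx X1 by have := psd_AAt r^T; rewrite trmxK.
    have hKX1 : KV V X1 = Kop ((V *m r^T) *m (V *m r^T)^T).
      by rewrite /KV /X1 [(V *m r^T)^T]trmx_mul trmxK !mulmxA.
    have hw : (V *m r^T) i 0 - (V *m r^T) j 0 = 2.
      by rewrite -(dr_mul_entry i j (V *m r^T)) mulmxA.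
    have hD1ij : KV V X1 i j = 4.
      by rewrite hKX1 Kop_AAt big_ord1 hw; lra.
    have hD1ji : KV V X1 j i = 4.
      by rewrite hKX1 Kop_AAt big_ord1 -opprB hw; lra.
    have hp1 : 0 <= - alpha * 16.
      apply: (small_t (b := frob2 (KV V X1))) (frob2_ge0 _) _ => t t0 t1.
      have := hineq (Xbar + t *: X1) (psd_add_scale hXbar.1 hX1 (ltW t0)).
      rewrite KV_lin -hDa addrAC subrr add0r frob2Z !mxZ_entry hD1ij hD1ji; lra.
    by rewrite lt_neqAle alpha0 /=; lra.
  - case=> hc ha.
    have := hmin X' hX'p; rewrite hX'K [X in X <= _]key.
    have hG : psdmx (V *m Xbar *m V^T) by apply: psd_congr; exact: hXbar.1.
    have hDij : 0 <= (KV V Xbar - D0) i j by rewrite mxB_entry hc subr0; exact: Kop_psd_ge0.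
    have hDji : 0 <= (KV V Xbar - D0) j i.
      by rewrite mxB_entry hD0sym hc subr0; exact: Kop_psd_ge0.
    have hm : 0 <= - alpha * ((KV V Xbar - D0) i j + (KV V Xbar - D0) j i).
      by apply: mulr_ge0; lra.
    move=> h; have : frob2 (KV V Xbar - D0) <= 0 by lra.
    by move/frob2_eq0/eqP; rewrite subr_eq0 => /eqP.
have hbc : (psdmx X0 /\ \tr (X0 *m Y) = 0) /\ alpha < 0 <-> D0 i j = 0 /\ alpha < 0.
  rewrite htr; split => [[[_ h] ha]|[h ha]]; split => //; [lra | split => //; lra].
split; first by rewrite hY hrow.
do 3 (split => //).
split => //.
by split => [/hac/hbc | /hbc/hac].
Qed.
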